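(* For $c\in(0,\tfrac12]$ and a path $\xi=x_1x_2\cdots\in\Omega$ put \[ K^{(c)}_n(\xi):=\prod_{j=2}^{n}\bigl(1-c\,\overline{x}_{j-1}x_j\bigr)\qquad(K^{(c)}_0=K^{(c)}_1=1). \] This is the capital of the multiplicative contrarian strategy $\mathcal{P}_c$: $M_n=-c\,\overline{x}_{n-1}\mathcal{K}_{n-1}$ with initial capital $1$. Let Skeptic follow the mixture $\mathcal{Q}=\sum_{i\ge1}2^{-i}\mathcal{P}_{2^{-i}}$ with initial capital $1$. His capital is then \[ \mathcal{K}_n=\sum_{i\ge1}2^{-i}K^{(2^{-i})}_n . \] Then $\mathcal{K}_n(\xi)\ge 0$ for all $\xi\in\Omega$ and all $n$. Moreover $\mathcal{K}_n(\xi)\to\infty$ as $n\to\infty$ for every path $\xi\notin E_1$, where \[ E_1:=\{\xi:\ \limsup_{n\to\infty}\sqrt n\,|\overline{x}_n|\ge 1\}. \] Equivalently, Skeptic can force $E_1$ by $\mathcal{Q}$.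
   Context: Fair-coin game: the initial capital is $\mathcal{K}_0$. In rounds $n=1,2,\dots$ Skeptic announces $M_n\in\mathbb{R}$, then Reality announces $x_n\in\{-1,1\}$, and $\mathcal{K}_n:=\mathcal{K}_{n-1}+M_nx_n$. Skeptic's move may depend only on $x_1,\dots,x_{n-1}$. A path is an infinite sequence $\xi=x_1x_2\cdots\in\{-1,1\}^{\mathbb{N}}$, and $\Omega$ is the set of paths. We write $s_n:=x_1+\cdots+x_n$ and $\overline{x}_n:=s_n/n$, with $s_0=\overline{x}_0=0$. A strategy $\mathcal{P}$ assigns a real number to each finite sequence (situation). Its capital process with zero initial capital is $\mathcal{K}^{\mathcal{P}}_n(\xi)=\sum_{k=1}^n\mathcal{P}(x_1\cdots x_{k-1})x_k$. Skeptic forces an event $E\subseteq\Omega$ if there is a strategy $\mathcal{P}$ such that $\mathcal{K}^{\mathcal{P}}_n(\xi)\ge-1$ for all $\xi\in\Omega$ and all $n\ge0$, and $\lim_n\mathcal{K}^{\mathcal{P}}_n(\xi)=\infty$ for all $\xi\notin E$. Equivalently, the capital started from $1$ stays nonnegative and tends to infinity off $E$. *)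

(* Defs.v *)
From Stdlib Require Import Reals.
From Coquelicot Require Import Coquelicot.
Open Scope R_scope.

(* A path is xi : nat -> bool; the move x_k (k >= 1) is +1 if xi k, -1 otherwise.
   The value xi 0 is never used. *)
Definition xv (xi : nat -> bool) (k : nat) : R := if xi k then 1 else -1.

Fixpoint s (xi : nat -> bool) (n : nat) : R :=
  match n with
  | O => 0
  | S m => s xi m + xv xi (S m)
  end.

Definition xbar (xi : nat -> bool) (n : nat) : R :=
  match n with
  | O => 0
  | _ => s xi n / INR n
  end.

(* K^(c)_n = prod_{j=2}^n (1 - c xbar_{j-1} x_j), K_0 = K_1 = 1.
   (The factor for j = 1 is 1 since xbar_0 = 0.) *)
Fixpoint Kc (c : R) (xi : nat -> bool) (n : nat) : R :=
  match n with
  | O => 1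
  | S m => Kc c xi m * (1 - c * xbar xi m * xv xi (S m))
  end.

Definition Pmove (c : R) (xi : nat -> bool) (n : nat) : R :=
  - c * xbar xi (n - 1) * Kc c xi (n - 1).

(* weights / parameters 2^{-i}, i >= 1 (series index i' = i - 1) *)
Definition w (i : nat) : R := (/ 2) ^ (S i).

Definition Qmove (xi : nat -> bool) (n : nat) : R :=
  Series (fun i => w i * Pmove (w i) xi n).

Fixpoint capitalQ (xi : nat -> bool) (n : nat) : R :=
  match n with
  | O => 1
  | S m => capitalQ xi m + Qmove xi (S m) * xv xi (S m)
  end.

Definition mixK (xi : nat -> bool) (n : nat) : R :=
  Series (fun i => w i * Kc (w i) xi n).

Definition notin_E1 (xi : nat -> bool) : Prop :=
  Rbar_lt (LimSup_seq (fun n => sqrt (INR n) * Rabs (xbar xi n))) (Finite 1).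

(* Main.v *)
Require Import Defs.
From Stdlib Require Import Reals Lra Lia Psatz.
From Coquelicot Require Import Coquelicot.
Open Scope R_scope.

Lemma xv_cases xi k : xv xi k = 1 \/ xv xi k = -1.
Proof. unfold xv; destruct (xi k); auto. Qed.

Lemma s_bound xi n : Rabs (s xi n) <= INR n.
Proof.
  induction n as [|m IH]; simpl s.
  - rewrite Rabs_R0; simpl; lra.
  - rewrite S_INR. apply Rabs_le_between in IH. apply Rabs_le_between.
    destruct (xv_cases xi (S m)) as [E|E]; rewrite E; lra.
Qed.

Lemma xbar_bound xi n : -1 <= xbar xi n <= 1.
Proof.
  destruct n as [|k]. simpl; lra.
  unfold xbar. pose proof (s_bound xi (S k)) as H.
  apply Rabs_le_between in H.
  assert (P : 0 < INR (S k)) by (apply lt_0_INR; lia).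
  split.
  - apply (Rmult_le_reg_r (INR (S k))); auto. field_simplify; lra.
  - apply (Rmult_le_reg_r (INR (S k))); auto. field_simplify; lra.
Qed.

Lemma factor_bounds c xi m : 0 <= c <= 1/2 ->
  1 - c <= 1 - c * xbar xi m * xv xi (S m) <= 1 + c.
Proof.
  intros Hc. pose proof (xbar_bound xi m).
  destruct (xv_cases xi (S m)) as [E|E]; rewrite E; split; nra.
Qed.

Lemma Kc_pos c xi n : 0 <= c <= 1/2 -> 0 < Kc c xi n.
Proof.
  intros Hc. induction n; simpl. lra.
  pose proof (factor_bounds c xi n Hc). apply Rmult_lt_0_compat; lra.
Qed.

Lemma Kc_le c xi n : 0 <= c <= 1/2 -> Kc c xi n <= 2 ^ n.
Proof.
  intros Hc. induction n; simpl. lra.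
  pose proof (factor_bounds c xi n Hc). pose proof (Kc_pos c xi n Hc).
  rewrite (Rmult_comm 2). apply Rmult_le_compat; lra.
Qed.

Lemma half_pow_le i : 0 < (/2)^i <= 1.
Proof. induction i; simpl; lra. Qed.

Lemma w_bounds i : 0 < w i <= 1/2.
Proof. unfold w. simpl. pose proof (half_pow_le i). lra. Qed.

Lemma w_series : is_series w 1.
Proof.
  assert (H := is_series_geom (/2)).
  assert (Ha : Rabs (/2) < 1) by (rewrite Rabs_pos_eq; lra).
  specialize (H Ha). apply (is_series_scal_r (/2)) in H.
  replace 1 with (/ (1 - /2) * /2) by field.
  eapply is_series_ext; [|exact H]. intros n. unfold w. simpl. ring.
Qed.

Lemma w_scaled_series (k : R) : is_series (fun i => k * w i) k.
Proof.
  pose proof (is_series_scal_r k _ _ w_series).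
  replace (1 * k) with k in H by ring.
  eapply is_series_ext; [|exact H]. intros; simpl; ring.
Qed.

Lemma Pmove_S c xi m : Pmove c xi (S m) = - c * xbar xi m * Kc c xi m.
Proof. unfold Pmove. simpl. rewrite Nat.sub_0_r. reflexivity. Qed.

Lemma Qmove_series xi m :
  is_series (fun i => w i * Pmove (w i) xi (S m)) (Qmove xi (S m)).
Proof.
  apply Series_correct.
  apply (@ex_series_le R_AbsRing R_CompleteNormedModule _ (fun i => 2 ^ m * w i)).
  - intros i. change (norm ?x) with (Rabs x). rewrite Pmove_S.
    pose proof (w_bounds i) as Hw. assert (Hw' : 0 <= w i <= 1/2) by lra.
    pose proof (Kc_pos _ xi m Hw'). pose proof (Kc_le _ xi m Hw').
    pose proof (xbar_bound xi m).
    set (K := Kc (w i) xi m) in *. set (b := xbar xi m) in *. set (v := w i) in *.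
    assert (A : -1 <= v * b <= 1) by nra.
    assert (B : - K <= v * b * K <= K) by nra.
    apply Rabs_le. split; nra.
  - eexists. apply w_scaled_series.
Qed.

Lemma capital_series xi n :
  is_series (fun i => w i * Kc (w i) xi n) (capitalQ xi n).
Proof.
  induction n as [|m IH].
  - simpl. eapply is_series_ext; [|exact w_series]. intros; simpl; ring.
  - simpl capitalQ.
    pose proof (is_series_scal_r (xv xi (S m)) _ _ (Qmove_series xi m)) as H2.
    pose proof (is_series_plus _ _ _ _ IH H2) as H3.
    eapply is_series_ext; [|exact H3]. intros i. simpl. rewrite Pmove_S.
    change plus with Rplus. ring.
Qed.

Lemma Series_zero : Series (fun _ => 0) = 0.
Proof.
  pose proof (w_scaled_series 0) as H.
  apply is_series_unique. eapply is_series_ext; [|exact H]. intros; simpl; ring.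
Qed.

Lemma Series_nonneg a : (forall k, 0 <= a k) -> ex_series a -> 0 <= Series a.
Proof.
  intros Ha He. rewrite <- Series_zero. apply Series_le; auto.
  intros; split; [lra|auto].
Qed.

Lemma sum_f_ge a i : (forall k, 0 <= a k) -> 0 <= sum_f_R0 a i /\ a i <= sum_f_R0 a i.
Proof.
  intros Ha. induction i; simpl. pose proof (Ha 0%nat); lra.
  pose proof (Ha (S i)); lra.
Qed.

Lemma Series_ge_term a i : (forall k, 0 <= a k) -> ex_series a -> a i <= Series a.
Proof.
  intros Ha He. rewrite (Series_incr_n a (S i)); [|lia|auto].
  simpl pred. pose proof (sum_f_ge a i Ha).
  assert (0 <= Series (fun k => a (S i + k)%nat)).
  { apply Series_nonneg. intros; apply Ha.
    apply ex_series_incr_n. auto. }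
  lra.
Qed.

Lemma ln_le_sub1 y : 0 < y -> ln y <= y - 1.
Proof. intros H. pose proof (exp_ineq1_le (ln y)). rewrite exp_ln in H0; lra. Qed.

Lemma ln_1pu u : -1/2 <= u -> u - 2 * u ^ 2 <= ln (1 + u).
Proof.
  intros Hu.
  assert (P : 0 < 1 + u) by lra.
  pose proof (ln_le_sub1 (/ (1 + u)) (Rinv_0_lt_compat _ P)) as H.
  rewrite ln_Rinv in H; auto.
  assert (E : / (1 + u) - 1 = - u / (1 + u)) by (field; lra).
  rewrite E in H.
  assert (u - 2 * u ^ 2 <= u / (1 + u)).
  { apply (Rmult_le_reg_r (1 + u)); auto. field_simplify; [|lra]. nra. }
  unfold Rdiv in *. lra.
Qed.

Lemma ln_succ_le m : 0 < m -> ln (m + 1) - ln m <= 1 / m.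
Proof.
  intros H. rewrite <- ln_div; try lra.
  pose proof (ln_le_sub1 ((m+1)/m)).
  assert (E : (m + 1) / m - 1 = 1 / m) by (field; lra).
  rewrite E in H0. apply H0. apply Rdiv_lt_0_compat; lra.
Qed.

Section Growth.
Variables (xi : nat -> bool) (c a : R) (N : nat).
Hypotheses (Hc : 0 < c <= 1/2) (Ha : 0 <= a < 1) (Hca : c <= (1 - a) / 8)
  (HN : (1 <= N)%nat) (Hs : forall n, (N <= n)%nat -> (s xi n) ^ 2 <= a * INR n).

Let delta := c * (1 - a) / 4.
Let Phi n := ln (Kc c xi n) + c * (s xi n) ^ 2 / (2 * INR n) - delta * ln (INR n).

Lemma Phi_step m : (N <= m)%nat -> Phi m <= Phi (S m).
Proof.
  intros Hm. unfold Phi.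
  assert (Hc' : 0 <= c <= 1/2) by lra.
  assert (Hm0 : 0 < INR m) by (apply lt_0_INR; lia).
  assert (HS2 := Hs m Hm). assert (HS2' := Hs (S m) ltac:(lia)).
  simpl Kc. simpl s. simpl s in HS2'. rewrite S_INR in *.
  assert (Hxb : xbar xi m = s xi m / INR m).
  { destruct m; [lia|reflexivity]. }
  rewrite Hxb in *. pose proof (Kc_pos c xi m Hc') as HK.
  pose proof (factor_bounds c xi m Hc') as HF. rewrite Hxb in HF.
  rewrite ln_mult; [|auto|lra].
  set (S0 := s xi m) in *. set (X := xv xi (S m)) in *. set (M := INR m) in *.
  set (u := - c * (S0 / M) * X).
  assert (Hu : 1 - c * (S0 / M) * X = 1 + u) by (unfold u; ring).
  rewrite Hu in *.
  pose proof (ln_1pu u ltac:(lra)) as Hl.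
  pose proof (ln_succ_le M Hm0) as Hl2.
  set (q1 := (S0 + X) ^ 2 / (M + 1)).
  set (q0 := S0 ^ 2 / M).
  assert (Hq1 : q1 <= a).
  { unfold q1. apply (Rmult_le_reg_r (M+1)); [lra|]. field_simplify; lra. }
  assert (Hq0 : q0 <= a).
  { unfold q0. apply (Rmult_le_reg_r M); [lra|]. field_simplify; lra. }
  assert (Hq0p : 0 <= q0).
  { unfold q0. apply Rdiv_le_0_compat; [nra|lra]. }
  assert (Id : u - 2 * u ^ 2 + c * (S0 + X) ^ 2 / (2 * (M + 1)) - c * S0 ^ 2 / (2 * M)
               = (1 / M) * (c / 2 - c * q1 / 2 - 2 * c ^ 2 * q0)).
  { unfold u, q1, q0. destruct (xv_cases xi (S m)) as [E|E]; fold X in E; rewrite E;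
    field; lra. }
  assert (Inner : delta <= c / 2 - c * q1 / 2 - 2 * c ^ 2 * q0).
  { unfold delta. nra. }
  assert (Hd : 0 <= delta) by (unfold delta; nra).
  assert (delta * (ln (M + 1) - ln M) <= delta * (1 / M)) by (apply Rmult_le_compat_l; lra).
  assert (delta * (1/M) <= (1/M) * (c / 2 - c * q1 / 2 - 2 * c ^ 2 * q0)).
  { rewrite Rmult_comm. apply Rmult_le_compat_l; [|lra]. apply Rdiv_le_0_compat; lra. }
  assert (E2 : c * (S0 + X) ^ 2 / (2 * (M + 1)) = c * (S0 + X) ^ 2 / (2 * (M + 1))) by reflexivity.
  lra.
Qed.

Lemma Phi_mono n : (N <= n)%nat -> Phi N <= Phi n.
Proof.
  induction 1. lra. pose proof (Phi_step m H). lra.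
Qed.

Lemma Kc_lim : is_lim_seq (Kc c xi) p_infty.
Proof.
  apply is_lim_seq_spec. intros Mx.
  set (M1 := Rmax Mx 1).
  assert (HM1 : 0 < M1) by (unfold M1; pose proof (Rmax_r Mx 1); lra).
  assert (Hd : 0 < delta) by (unfold delta; nra).
  set (T := (ln M1 - Phi N + c / 2) / delta).
  destruct (archimed_cor1 (/ exp T)) as [n0 [Hn0 Hn0']].
  { apply Rinv_0_lt_compat, exp_pos. }
  exists (max N n0). intros n Hn.
  assert (HnN : (N <= n)%nat) by lia.
  assert (Hn0n : (n0 <= n)%nat) by lia.
  assert (Hnpos : 0 < INR n) by (apply lt_0_INR; lia).
  assert (Hexp : exp T < INR n).
  { assert (INR n0 <= INR n) by (apply le_INR; auto).
    assert (0 < INR n0) by (apply lt_0_INR; lia).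
    assert (exp T < INR n0).
    { rewrite <- (Rinv_inv (INR n0)). rewrite <- (Rinv_inv (exp T)).
      apply Rinv_lt_contravar; auto.
      apply Rmult_lt_0_compat; [|apply Rinv_0_lt_compat, exp_pos]. apply Rinv_0_lt_compat; auto. }
    lra. }
  assert (HlnT : T < ln (INR n)).
  { rewrite <- (ln_exp T). apply ln_increasing; auto. apply exp_pos. }
  pose proof (Phi_mono n HnN) as HP. unfold Phi in HP at 2.
  assert (HV : c * s xi n ^ 2 / (2 * INR n) <= c / 2).
  { pose proof (Hs n HnN). assert (s xi n ^ 2 <= INR n) by nra.
    assert (c * s xi n ^ 2 <= c * INR n) by (apply Rmult_le_compat_l; lra).
    apply (Rmult_le_reg_r (2 * INR n)); [lra|].
    field_simplify; lra. }
  assert (Hlog : ln M1 < ln (Kc c xi n)).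
  { assert (delta * T < delta * ln (INR n)) by (apply Rmult_lt_compat_l; auto).
    assert (delta * T = ln M1 - Phi N + c / 2) by (unfold T; field; lra).
    lra. }
  assert (Hc' : 0 <= c <= 1/2) by lra.
  apply ln_lt_inv in Hlog; auto; [|apply Kc_pos; auto].
  pose proof (Rmax_l Mx 1). fold M1 in H. lra.
Qed.
End Growth.

Lemma from_limsup xi : notin_E1 xi ->
  exists a N, 0 <= a < 1 /\ (1 <= N)%nat /\
    forall n, (N <= n)%nat -> (s xi n) ^ 2 <= a * INR n.
Proof.
  unfold notin_E1. intros H.
  set (u := fun n => sqrt (INR n) * Rabs (xbar xi n)) in *.
  assert (Hu0 : forall n, 0 <= u n).
  { intros; unfold u. apply Rmult_le_pos; [apply sqrt_pos|apply Rabs_pos]. }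
  assert (Key : exists b N, 0 <= b < 1 /\ forall n, (N <= n)%nat -> u n <= b).
  { destruct (ex_LimSup_seq u) as [l Hl].
    rewrite (is_LimSup_seq_unique _ _ Hl) in H.
    destruct l as [r| |]; simpl in H.
    - assert (He : 0 < (1 - r) / 2) by lra.
      destruct (proj2 (Hl (mkposreal _ He))) as [N HN]. simpl in HN.
      exists (Rmax ((1 + r)/2) 0), N. split.
      + split; [apply Rmax_r|]. apply Rmax_lub_lt; lra.
      + intros n Hn. specialize (HN n Hn). pose proof (Rmax_l ((1+r)/2) 0). lra.
    - contradiction.
    - destruct (Hl 0) as [N HN]. exists 0, N. split; [lra|].
      intros n Hn. specialize (HN n Hn). lra. }
  destruct Key as [b [N [Hb HN]]].
  exists (b ^ 2), (max N 1). split; [split; nra|]. split; [lia|].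
  intros n Hn. specialize (HN n ltac:(lia)).
  assert (Hnp : 0 < INR n) by (apply lt_0_INR; lia).
  assert (Hsq : u n ^ 2 <= b ^ 2) by (pose proof (Hu0 n); nra).
  assert (E : u n ^ 2 = s xi n ^ 2 / INR n).
  { unfold u. rewrite Rpow_mult_distr, pow2_abs.
    rewrite <- Rsqr_pow2, Rsqr_sqrt; [|lra].
    destruct n as [|k]; [simpl in Hnp; lra|]. unfold xbar. field. lra. }
  rewrite E in Hsq. apply (Rmult_le_reg_r (/ INR n)); [apply Rinv_0_lt_compat; lra|].
  replace (b ^ 2 * INR n * / INR n) with (b ^ 2) by (field; lra). exact Hsq.
Qed.

Theorem theorem1 (xi : nat -> bool) :
  (forall n : nat, capitalQ xi n = mixK xi n) /\
  (forall n : nat, 0 <= mixK xi n) /\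
  (notin_E1 xi -> is_lim_seq (mixK xi) p_infty).
Proof.
  assert (Eq : forall n, capitalQ xi n = mixK xi n).
  { intros n. unfold mixK. symmetry. apply is_series_unique, capital_series. }
  assert (Tpos : forall n i, 0 <= w i * Kc (w i) xi n).
  { intros n i. pose proof (w_bounds i). apply Rmult_le_pos; [lra|].
    apply Rlt_le, Kc_pos; lra. }
  assert (Ex : forall n, ex_series (fun i => w i * Kc (w i) xi n)).
  { intros n. eexists. apply capital_series. }
  split; [exact Eq|]. split.
  { intros n. apply Series_nonneg; auto. }
  intros H. destruct (from_limsup xi H) as [a [N [Ha [HN Hs]]]].
  assert (Hep : 0 < (1 - a) / 8) by lra.
  destruct (pow_lt_1_zero (/2) ltac:(rewrite Rabs_pos_eq; lra) _ Hep) as [i0 Hi0].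
  specialize (Hi0 (S i0) ltac:(lia)). rewrite Rabs_pos_eq in Hi0 by (apply pow_le; lra).
  pose proof (w_bounds i0) as Hw.
  assert (Hlim := Kc_lim xi (w i0) a N ltac:(lra) Ha ltac:(unfold w; lra) HN Hs).
  apply is_lim_seq_spec in Hlim. apply is_lim_seq_spec. intros M.
  destruct (Hlim (M / w i0)) as [N1 HN1]. exists N1. intros n Hn.
  specialize (HN1 n Hn).
  assert (M < w i0 * Kc (w i0) xi n).
  { apply (Rmult_lt_compat_l (w i0)) in HN1; [|lra].
    replace (w i0 * (M / w i0)) with M in HN1 by (field; lra). exact HN1. }
  pose proof (Series_ge_term _ i0 (Tpos n) (Ex n)). unfold mixK. lra.
Qed.
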